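(* Let $p_0,p_1,p_2$ be positive integers with $\gcd(p_0,p_1,p_2)=1$, and put $n=p_0+p_1+p_2$. Let $E=(\mathbb{Z}/n\mathbb{Z})\times\{0,1,2\}$ and define permutations $\sigma_0,\sigma_1$ of $E$ by $$\sigma_0(m,0)=(m,1),\quad \sigma_0(m,1)=(m,2),\quad \sigma_0(m,2)=(m,0),$$ $$\sigma_1(m,0)=(m-p_1,2),\quad \sigma_1(m,1)=(m-p_2,0),\quad \sigma_1(m,2)=(m-p_0,1),$$ with arithmetic in the first coordinate modulo $n$. Let $G=\langle\sigma_0,\sigma_1\rangle$, $N=\langle\sigma_0\sigma_1,\sigma_1\sigma_0\rangle$ and $H=\langle\sigma_0\rangle$. Then $NH=G$.
   Context: These $\sigma_0,\sigma_1$ are the monodromy permutations of the dessin drawn on the rational billiards surface of the triangle with angles $(p_0\pi/n,p_1\pi/n,p_2\pi/n)$, acting on its $3n$ edges labeled $(m,i)$; $G$ is its monodromy group. Products are composition of functions, and $NH=\{xh: x\in N,\ h\in H\}$. *)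

(* Defs.v *)
From mathcomp Require Import all_boot all_order all_fingroup.
Set Implicit Arguments. Unset Strict Implicit. Unset Printing Implicit Defensive.



Definition edge (n : nat) := ('I_n * 'I_3)%type.

Lemma ord_pos n (m : 'I_n) : 0 < n.
Proof. by case: m => m /= /(leq_ltn_trans (leq0n m)). Qed.

Definition subm n (m : 'I_n) (k : nat) : 'I_n :=
  Ordinal (ltn_pmod (m + (n - k %% n)) (ord_pos m)).

Arguments subm : simpl never.

Definition i0 : 'I_3 := @Ordinal 3 0 isT.
Definition i1 : 'I_3 := @Ordinal 3 1 isT.
Definition i2 : 'I_3 := @Ordinal 3 2 isT.

Definition sigma0_fun n (e : edge n) : edge n :=
  let: (m, i) := e in
  if val i == 0 then (m, i1) else if val i == 1 then (m, i2) else (m, i0).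

Definition sigma1_fun (p0 p1 p2 : nat) n (e : edge n) : edge n :=
  let: (m, i) := e in
  if val i == 0 then (subm m p1, i2)
  else if val i == 1 then (subm m p2, i0) else (subm m p0, i1).

Lemma subm_inj n k : injective (fun m : 'I_n => subm m k).
Proof.
move=> a b /(congr1 val) /= /eqP; rewrite eqn_modDr => /eqP.
by rewrite !modn_small // => /val_inj.
Qed.

Lemma subm_eq n k (a b : 'I_n) :
  (a + (n - k %% n)) %% n = (b + (n - k %% n)) %% n -> a = b.
Proof. by move=> E; apply: (@subm_inj n k); apply: val_inj. Qed.

Lemma sigma0_inj n : injective (@sigma0_fun n).
Proof.
move=> [m i] [m' i'] /=.
case: i => [[|[|[|?]]] Hi] //=; case: i' => [[|[|[|?]]] Hi'] //= [] ->;
  try (by []);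
  by congr pair; apply: val_inj.
Qed.

Lemma sigma1_inj p0 p1 p2 n : injective (@sigma1_fun p0 p1 p2 n).
Proof.
move=> [m i] [m' i'] /=.
case: i => [[|[|[|?]]] Hi] //=; case: i' => [[|[|[|?]]] Hi'] //= [] /subm_eq ->;
  try (by []);
  by congr pair; apply: val_inj.
Qed.

Definition sigma0 n : {perm edge n} := perm (@sigma0_inj n).
Definition sigma1 p0 p1 p2 n : {perm edge n} := perm (@sigma1_inj p0 p1 p2 n).

(* Composition of functions: (compp s t) x = s (t x); in mathcomp {perm}
   the product s * t means "first s then t", so compp s t = t * s. *)
Definition compp T (s t : {perm T}) : {perm T} := (t * s)%g.

Definition setcomp T (A B : {set {perm T}}) : {set {perm T}} :=
  [set compp x h | x in A, h in B].

(* Main.v *)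
Require Import Defs.
From mathcomp Require Import all_boot all_order all_fingroup.
From mathcomp Require Import zify.
Local Open Scope group_scope.

Section Abs.
Variable gT : finGroupType.

Lemma abs_main (a b : gT) : a ^+ 3 = 1 -> b ^+ 3 = 1 ->
  let N := <<[set b * a; a * b]>> in
  let H := <<[set a]>> in
  (H * N)%g = <<[set a; b]>>.
Proof.
move=> a3 b3 N H.
have a3' : a * (a * a) = 1 by rewrite -a3 !expgS expg0 mulg1.
have b3' : b * (b * b) = 1 by rewrite -b3 !expgS expg0 mulg1.
have ai : a^-1 = a * a.
  by apply/eqP; rewrite eq_invg_mul a3'.
have bi : b = b^-1 * b^-1.
  by apply/esym/eqP; rewrite -invMg eq_invg_mul -mulgA b3'.
have abN : a * b \in N by rewrite mem_gen // !inE eqxx orbT.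
have baN : b * a \in N by rewrite mem_gen // !inE eqxx.
have nN : H \subset 'N(N).
  rewrite gen_subG sub1set.
  have sN : N \subset N :^ a^-1.
    rewrite gen_subG; apply/subsetP => y; rewrite !inE => /orP [] /eqP ->;
      rewrite mem_conjg invgK.
    - have -> : (b * a) ^ a = (b * a)^-1 * (a * b)^-1.
        by rewrite /conjg !invMg -!mulgA (mulgA b^-1) -bi -ai.
      by rewrite groupM ?groupV.
    - by rewrite /conjg !mulgA mulVg mul1g.
  have eN : N :^ a^-1 = N.
    by apply/esym/eqP; rewrite eqEcard sN cardJg leqnn.
  rewrite -groupV; apply/normP; exact: eN.
rewrite -(comm_joingE (normC nN)).
apply/eqP; rewrite eqEsubset; apply/andP; split.
  rewrite join_subG !gen_subG !sub1set; apply/andP; split.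
    by rewrite mem_gen // !inE eqxx.
  apply/subsetP => y; rewrite !inE => /orP [] /eqP ->;
  by rewrite groupM // mem_gen // !inE eqxx ?orbT.
have aJ : a \in H <*> N by rewrite mem_gen // inE mem_gen // inE eqxx.
rewrite gen_subG; apply/subsetP => y; rewrite !inE => /orP [] /eqP -> //.
have bJ : a^-1 * (a * b) \in H <*> N.
  by rewrite groupM ?groupV // mem_gen // inE abN orbT.
by rewrite mulKg in bJ.
Qed.
End Abs.

Lemma subm3 n (m : 'I_n) x y z : (0 < x)%N -> (0 < y)%N -> (0 < z)%N ->
  (x + y + z = n)%N -> subm (subm (subm m x) y) z = m.
Proof.
move=> x0 y0 z0 e; apply: val_inj; rewrite /subm /=.
have xn : (x < n)%N by rewrite -e; lia.
have yn : (y < n)%N by rewrite -e; lia.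
have zn : (z < n)%N by rewrite -e; lia.
rewrite !(modn_small xn) !(modn_small yn) !(modn_small zn).
rewrite !modnDml -!addnA modnDml !addnA.
have -> : (m + (n - x) + (n - y) + (n - z) = m + n * 2)%N.
  lia.
by rewrite addnC mulnC modnMDl modn_small.
Qed.

Lemma s0_3 n : (sigma0 n) ^+ 3 = 1.
Proof.
apply/permP => [[m [[|[|[|k]]] Hk]]]; rewrite !expgS expg0 mulg1 !permM perm1 /sigma0 !permE //=;
  by congr pair; apply: val_inj.
Qed.

Lemma s1_3 p0 p1 p2 : (0 < p0)%N -> (0 < p1)%N -> (0 < p2)%N ->
  (sigma1 p0 p1 p2 (p0 + p1 + p2)) ^+ 3 = 1.
Proof.
move=> h0 h1 h2.
apply/permP => [[m [[|[|[|k]]] Hk]]]; rewrite !expgS expg0 mulg1 !permM perm1 /sigma1 !permE //=;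
  (congr pair; [apply: subm3 => //; lia | by apply: val_inj]).
Qed.

Theorem lemma6 (p0 p1 p2 : nat) :
  (0 < p0)%N -> (0 < p1)%N -> (0 < p2)%N -> gcdn (gcdn p0 p1) p2 = 1%N ->
  let n := p0 + p1 + p2 in
  let s0 : {perm edge n} := sigma0 n in
  let s1 : {perm edge n} := sigma1 p0 p1 p2 n in
  let G := <<[set s0; s1]>> in
  let N := <<[set compp s0 s1; compp s1 s0]>> in
  let H := <<[set s0]>> in
  setcomp N H = G.
Proof.
move=> h0 h1 h2 _ n s0 s1 G N H.
have := @abs_main _ _ _ (s0_3 n) (@s1_3 p0 p1 p2 h0 h1 h2).
rewrite /= -/s0 -/s1 /G /N /H /compp => <-.
apply/setP => y; apply/imset2P/imset2P => -[u v uin vin ->].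
  by exists v u.
by exists v u.
Qed.
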